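(* Let $\nu,\sigma>0$ and $V\in W^{2,\infty}_{loc}(\mathbb{R})$ with $\lim_{|x|\to\infty}V(x)=\infty$. Let $f_0\in L^1(\mathbb{R}^2)$, $f_0\ge0$, $\int_{\mathbb{R}^2}f_0\,dx\,dv=1$, and let $f$ be the solution of the kinetic Fokker–Planck equation $\partial_tf+v\,\partial_xf-V'(x)\,\partial_vf=\nu\,\partial_v(vf)+\sigma\,\partial_v^2f$, $x,v\in\mathbb{R}$, $t>0$, with $f(0)=f_0$. Then $f(t,x,v)>0$ for all $t>0$ and all $x,v\in\mathbb{R}$.
   Context: ''The solution'' refers to the (well-posed, mass-conserving, instantaneously smooth) solution of this equation. *)

(* Defs.v *)
From HB Require Import structures.
From mathcomp Require Import all_boot all_order all_algebra.
From mathcomp Require Import all_classical all_reals all_analysis.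
Set Implicit Arguments. Unset Strict Implicit. Unset Printing Implicit Defensive.
Import Order.TTheory GRing.Theory Num.Theory.
Import numFieldNormedType.Exports.
Local Open Scope classical_set_scope.
Local Open Scope ring_scope.

Definition leb2 (R : realType) :=
  ((@lebesgue_measure R) \x (@lebesgue_measure R))%E.

(* V in W^{2,oo}_loc(R): V is differentiable and V' is locally Lipschitz
   (W^{1,oo}_loc = locally Lipschitz, via the continuous representative). *)
Definition W2inf_loc (R : realType) (V : R -> R) : Prop :=
  (forall x, derivable V x 1) /\
  (forall a b : R, exists L : R, forall x y, a <= x <= b -> a <= y <= b ->
      `|derive1 V x - derive1 V y| <= L * `|x - y|).

Definition dt (R : realType) (f : R -> R -> R -> R) t x v := derive1 (fun s => f s x v) t.
Definition dx (R : realType) (f : R -> R -> R -> R) t x v := derive1 (fun y => f t y v) x.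
Definition dv (R : realType) (f : R -> R -> R -> R) t x v := derive1 (fun w => f t x w) v.
Definition dvv (R : realType) (f : R -> R -> R -> R) t x v :=
  derive1 (fun w => dv f t x w) v.
Definition dv_vf (R : realType) (f : R -> R -> R -> R) t x v :=
  derive1 (fun w => w * f t x w) v.

Definition cont_pos (R : realType) (g : R -> R -> R -> R) : Prop :=
  forall t x v : R, 0 < t ->
    {for ((t, x), v), continuous (fun p : R * R * R => g p.1.1 p.1.2 p.2)}.

(* Classical (instantaneously smooth), nonnegative, mass-conserving solution
   on t > 0 of
     d_t f + v d_x f - V'(x) d_v f = nu d_v (v f) + sigma d_v^2 f,
   with f(t) -> f0 in L^1(R^2) as t -> 0+. *)
Definition kfp_solution (R : realType) (nu sigma : R) (V : R -> R)
    (f0 : R * R -> R) (f : R -> R -> R -> R) : Prop :=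
      (forall t x v, 0 < t ->
         [/\ derivable (fun s => f s x v) t 1,
             derivable (fun y => f t y v) x 1,
             derivable (fun w => f t x w) v 1 &
             derivable (fun w => dv f t x w) v 1]) /\
      cont_pos f /\ cont_pos (dt f) /\ cont_pos (dx f) /\ cont_pos (dv f)
        /\ cont_pos (dvv f) /\
      (forall t x v, 0 < t ->
         dt f t x v + v * dx f t x v - derive1 V x * dv f t x v
         = nu * dv_vf f t x v + sigma * dvv f t x v) /\
      (forall t x v, 0 < t -> 0 <= f t x v) /\
      (forall t, 0 < t ->
         (@leb2 R).-integrable setT (fun z : R * R => (f t z.1 z.2)%:E) /\
         (\int[@leb2 R]_z (f t z.1 z.2)%:E = 1)%E) /\
      ((\int[@leb2 R]_z (`|f t z.1 z.2 - f0 z|)%:E)%E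
         @[t --> (0:R)^'+] --> 0%E).

(* Main.v *)
Set Warnings "-notation-overridden,-ambiguous-paths,-parsing".
Require Import Defs.
From HB Require Import structures.
From mathcomp Require Import all_boot all_order all_algebra.
From mathcomp Require Import all_classical all_reals all_analysis.
From mathcomp Require Import ring lra.
Import Order.TTheory GRing.Theory Num.Theory.
Import numFieldNormedType.Exports.
Local Open Scope classical_set_scope.
Local Open Scope ring_scope.
Section Helpers.
Variable R : realType.
Lemma c_t p : {for p, continuous (fun q : R * R * R => q.1.1)}.
Proof. apply: continuous_comp; [exact: cvg_fst|exact: cvg_fst]. Qed.
Lemma c_x p : {for p, continuous (fun q : R * R * R => q.1.2)}.
Proof. apply: continuous_comp; [exact: cvg_fst|exact: cvg_snd]. Qed.
Lemma c_v p : {for p, continuous (fun q : R * R * R => q.2)}.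
Proof. exact: cvg_snd. Qed.
Lemma c_cst p (c : R) : {for p, continuous (fun q : R * R * R => c)}.
Proof. exact: cst_continuous. Qed.
Lemma c_add p (F G : R * R * R -> R) : {for p, continuous F} -> {for p, continuous G} ->
  {for p, continuous (fun q => F q + G q)}.
Proof. exact: continuousD. Qed.
Lemma c_sub p (F G : R * R * R -> R) : {for p, continuous F} -> {for p, continuous G} ->
  {for p, continuous (fun q => F q - G q)}.
Proof. exact: continuousB. Qed.
Lemma c_mul p (F G : R * R * R -> R) : {for p, continuous F} -> {for p, continuous G} ->
  {for p, continuous (fun q => F q * G q)}.
Proof. exact: continuousM. Qed.
Lemma c_opp p (F : R * R * R -> R) : {for p, continuous F} ->
  {for p, continuous (fun q => - F q)}.
Proof. exact: continuousN. Qed.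
Lemma c_exp p (F : R * R * R -> R) : {for p, continuous F} ->
  {for p, continuous (fun q => expR (F q))}.
Proof. move=> h; have := continuous_comp h (@continuous_expR R (F p)); exact. Qed.
Lemma c_pow p (F : R * R * R -> R) n : {for p, continuous F} ->
  {for p, continuous (fun q => F q ^+ n)}.
Proof. move=> h; have := continuous_comp h (@exprn_continuous R n (F p)); exact. Qed.
Lemma barrier_core (s b K M2 E g gv : R) : 0 < s -> 0 < b -> 0 < g -> g <= 1 -> E^+2 <= M2 ->
  12 * s * b + M2 / s + 1 <= K ->
  - K * g^+2 + 3 * g * (4 * s * b * g + s * gv^+2 - E * gv) - 6 * s * gv^+2 < 0.
Proof.
move=> s0 b0 g0 g1 EM HK.
set D := M2 / s.
have hD : s * D = M2 by rewrite /D mulrC divfK // gt_eqF.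
have h1 : 3 * s * g * gv^+2 <= 3 * s * gv^+2.
  have : 0 <= 3 * s * gv^+2 * (1 - g).
    by apply: mulr_ge0; [apply: mulr_ge0; [lra| exact: sqr_ge0]| lra].
  lra.
have h2 : 0 <= (2 * s * gv + E * g)^+2 by exact: sqr_ge0.
have h3 : E^+2 * g^+2 <= s * D * g^+2 by rewrite hD; apply: ler_wpM2r => //; exact: sqr_ge0.
have h4 : - 3 * g * E * gv <= 3 * s * gv^+2 + D * g^+2.
  have e : 4 * (s * (3 * s * gv^+2 + D * g^+2 + 3 * g * E * gv)) =
     3 * (2 * s * gv + E * g)^+2 + (4 * (s * D * g^+2) - 3 * (E^+2 * g^+2)) by ring.
  have h5 : 0 <= E^+2 * g^+2 by apply: mulr_ge0; exact: sqr_ge0.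
  have : 0 <= s * (3 * s * gv^+2 + D * g^+2 + 3 * g * E * gv).
    have : 0 <= 4 * (s * (3 * s * gv^+2 + D * g^+2 + 3 * g * E * gv)) by rewrite e; lra.
    lra.
  rewrite pmulr_rge0 //; lra.
have hg2 : 0 < g^+2 by rewrite exprn_gt0.
have h6 : (12 * s * b + D + 1) * g^+2 <= K * g^+2 by apply: ler_wpM2r => //; exact: ltW.
have e2 : - K * g^+2 + 3 * g * (4 * s * b * g + s * gv^+2 - E * gv) - 6 * s * gv^+2
  = - K * g^+2 + 12 * s * b * g^+2 + 3 * s * g * gv^+2 + (- 3 * g * E * gv) - 6 * s * gv^+2 by ring.
rewrite e2. lra.
Qed.

Definition alph (s b : R) := 16 * s^+2 * b^+3.
Definition tau (s b : R) := (4 * s * b)^-1.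
Definition uu s b xi eta (x v : R) := x - xi - tau s b * (v - eta).
Definition gg s b xi eta (x v : R) :=
  1 - alph s b * (uu s b xi eta x v)^+2 - b * (v - eta)^+2.
Definition ggt s b xi eta deta (x v : R) :=
  2 * alph s b * uu s b xi eta x v * (eta - tau s b * deta) + 2 * b * (v - eta) * deta.
Definition ggx s b xi eta (x v : R) := - 2 * alph s b * uu s b xi eta x v.
Definition ggv s b xi eta (x v : R) :=
  2 * alph s b * tau s b * uu s b xi eta x v - 2 * b * (v - eta).
Definition ggvv (s b : R) := - 2 * (alph s b * (tau s b)^+2 + b).

Lemma gg_le1 s b xi eta x v : 0 <= s -> 0 <= b -> gg s b xi eta x v <= 1.
Proof.
move=> s0 b0; rewrite /gg /alph.
have h1 : 0 <= 16 * s^+2 * b^+3 * uu s b xi eta x v ^+ 2.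
  by apply: mulr_ge0; [apply: mulr_ge0; [apply: mulr_ge0 => //; exact: sqr_ge0| exact: exprn_ge0]| exact: sqr_ge0].
have h2 : 0 <= b * (v - eta)^+2 by apply: mulr_ge0 => //; exact: sqr_ge0.
lra.
Qed.

Lemma barrier_main (s b K M2 A xi eta deta x v Vp nu : R) :
  0 < s -> 0 < b -> 0 < A -> 0 < gg s b xi eta x v ->
  (deta + Vp + nu * v)^+2 <= M2 -> 12 * s * b + M2 / s + 1 <= K ->
  (- K * A * (gg s b xi eta x v)^+3 + 3 * A * (gg s b xi eta x v)^+2 * ggt s b xi eta deta x v)
  - (- v * (3 * A * (gg s b xi eta x v)^+2 * ggx s b xi eta x v)
     + (Vp + nu * v) * (3 * A * (gg s b xi eta x v)^+2 * ggv s b xi eta x v)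
     + s * (3 * A * (2 * (gg s b xi eta x v) * (ggv s b xi eta x v)^+2
                     + (gg s b xi eta x v)^+2 * ggvv s b))) < 0.
Proof.
move=> s0 b0 A0 g0 HE HK.
set E := deta + Vp + nu * v; set gv := ggv s b xi eta x v; set g := gg s b xi eta x v.
have H := barrier_core s b K M2 E g gv s0 b0 g0 (gg_le1 s b xi eta x v (ltW s0) (ltW b0)) HE HK.
have sb : 4 * s * b != 0 by rewrite mulf_neq0 // ?mulf_neq0 // gt_eqF.
have e : forall kt, kt = - K * A * g^+3 + 3 * A * g^+2 * ggt s b xi eta deta x v ->
  kt - (- v * (3 * A * g^+2 * ggx s b xi eta x v) + (Vp + nu * v) * (3 * A * g^+2 * gv)
     + s * (3 * A * (2 * g * gv^+2 + g^+2 * ggvv s b))) =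
  A * g * (- K * g^+2 + 3 * g * (4 * s * b * g + s * gv^+2 - E * gv) - 6 * s * gv^+2).
  move=> kt ->.
  rewrite /g /gv /E /gg /ggt /ggx /ggv /ggvv /uu /alph /tau.
  field.
  by rewrite !gt_eqF.
rewrite e // pmulr_rlt0 //; exact: mulr_gt0.
Qed.
Lemma deriv_cvg (g : R -> R) c : derivable g c 1 ->
  (fun h => h^-1 * (g (h + c) - g c)) @ 0^' --> derive1 g c.
Proof.
move=> H.
have e : (fun h : R => h^-1 *: ((g \o shift c) (h *: (1:R)) - g c)) = (fun h => h^-1 * (g (h + c) - g c)).
  by apply/funext => h /=; rewrite [h *: 1]mulr1.
rewrite derive1E /derive -e; exact: H.
Qed.

Lemma near0'_ball (P : R -> Prop) : (\forall h \near (0:R)^', P h) ->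
  exists2 r : R, 0 < r & forall h, h != 0 -> `|h| < r -> P h.
Proof.
move=> /nbhs_ballP [r r0 Hr]; exists r => // h h0 hr; apply: Hr => //.
by rewrite /ball /= sub0r normrN.
Qed.

Lemma left_min_deriv (g : R -> R) (c e : R) : derivable g c 1 -> 0 < e ->
  (forall y, c - e < y -> y <= c -> g c <= g y) -> derive1 g c <= 0.
Proof.
move=> dg e0 Hmin; rewrite leNgt; apply/negP => d0.
have H0 := cvgr_gt _ (deriv_cvg g c dg) _ d0.
have [r r0 Hr] := near0'_ball _ (H0 _).
set m := Num.min r e.
have m0 : 0 < m by rewrite lt_min r0.
have mr : m <= r by rewrite ge_min lexx.
have me : m <= e by rewrite ge_min lexx orbT.
set h := - (m / 2).
have hneg : h < 0 by rewrite /h oppr_lt0 divr_gt0.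
have hr : `|h| < r by rewrite ltr0_norm // /h opprK; lra.
have := Hr h (ltr0_neq0 hneg) hr.
have := Hmin (h + c) ltac:(rewrite /h; lra) ltac:(lra).
move=> H1 H2.
have : h^-1 * (g (h + c) - g c) <= 0.
  by apply: mulr_le0_ge0; [rewrite invr_le0; exact: ltW| lra].
lra.
Qed.

Lemma second_min (phi dphi : R -> R) (c a b : R) : a < c -> c < b ->
  (forall y, a < y -> y < b -> is_derive y 1 phi (dphi y)) -> derivable dphi c 1 ->
  dphi c = 0 -> (forall y, a < y -> y < b -> phi c <= phi y) -> 0 <= derive1 dphi c.
Proof.
move=> ac cb dphiP ddc dc0 Hmin; rewrite leNgt; apply/negP => d0.
have H0 := cvgr_lt _ (deriv_cvg dphi c ddc) _ d0.
have [r r0 Hr] := near0'_ball _ (H0 _).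
set m := Num.min r (b - c).
have m0 : 0 < m by rewrite lt_min r0 subr_gt0.
have mr : m <= r by rewrite ge_min lexx.
have mb : m <= b - c by rewrite ge_min lexx orbT.
set h1 := m / 2.
have h10 : 0 < h1 by rewrite divr_gt0.
have eh : h1 = m / 2 by [].
clearbody h1 m.
have neg : forall y, 0 < y -> y <= h1 -> dphi (y + c) < 0.
  move=> y y0 yh.
  have := Hr y (lt0r_neq0 y0) ltac:(rewrite gtr0_norm //; lra).
  by rewrite dc0 subr0 pmulr_rlt0 // invr_gt0.
have cc : c < c + h1 by lra.
have [z zI eqz] := @MVT R phi dphi c (c + h1) cc
  ltac:(move=> z; rewrite in_itv /= => /andP [z1 z2]; apply: dphiP; lra)
  ltac:(apply: derivable_within_continuous => z; rewrite in_itv /= => /andP [z1 z2];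
        have := dphiP z ltac:(lra) ltac:(lra); by case).
move: zI; rewrite in_itv /= => /andP [z1 z2].
have := neg (z - c) ltac:(lra) ltac:(lra); rewrite subrK => dz.
have := Hmin (c + h1) ltac:(lra) ltac:(lra).
have : dphi z * (c + h1 - c) < 0 by rewrite pmulr_llt0 //; lra.
lra.
Qed.

Lemma final_contra (E0 F Fx Fv Fvv Ft Vp nu sg v kt kx kv kvv : R) :
  0 < E0 -> 0 < sg ->
  E0 * Fx - kx = 0 -> E0 * Fv - kv = 0 -> 0 <= E0 * Fvv - kvv ->
  (- nu * E0 * F + E0 * Ft) - kt <= 0 ->
  Ft + v * Fx - Vp * Fv = nu * (F + v * Fv) + sg * Fvv ->
  kt - (- v * kx + (Vp + nu * v) * kv + sg * kvv) < 0 -> False.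
Proof.
move=> E00 sg0 hx hv hvv ht heq hb.
have ex : kx = E0 * Fx by lra.
have ev : kv = E0 * Fv by lra.
have e1 : E0 * (Ft + v * Fx - Vp * Fv) = E0 * (nu * (F + v * Fv) + sg * Fvv) by rewrite heq.
have e2 : sg * kvv <= sg * (E0 * Fvv) by rewrite ler_pM2l //; lra.
move: hb; rewrite ex ev.
have e3 : kt - (- v * (E0 * Fx) + (Vp + nu * v) * (E0 * Fv) + sg * kvv) =
  (kt - (- nu * E0 * F + E0 * Ft)) + (sg * (E0 * Fvv) - sg * kvv)
  + (E0 * (Ft + v * Fx - Vp * Fv) - E0 * (nu * (F + v * Fv) + sg * Fvv)) by ring.
rewrite e3 e1; lra.
Qed.
Lemma dk_x (A s b xi eta x v : R) :
  is_derive x 1 (fun y => A * gg s b xi eta y v ^+ 3)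
    (3 * A * gg s b xi eta x v ^+ 2 * ggx s b xi eta x v).
Proof.
rewrite /gg /ggx /uu. apply: is_derive_eq. rewrite -![_ *: _]/(_ * _). ring.
Qed.

Lemma dk_v (A s b xi eta x v : R) :
  is_derive v 1 (fun w => A * gg s b xi eta x w ^+ 3)
    (3 * A * gg s b xi eta x v ^+ 2 * ggv s b xi eta x v).
Proof.
rewrite /gg /ggv /uu. apply: is_derive_eq. rewrite -![_ *: _]/(_ * _). ring.
Qed.

Lemma dk_vv (A s b xi eta x v : R) :
  is_derive v 1 (fun w => 3 * A * gg s b xi eta x w ^+ 2 * ggv s b xi eta x w)
    (3 * A * (2 * gg s b xi eta x v * ggv s b xi eta x v ^+ 2 + gg s b xi eta x v ^+ 2 * ggvv s b)).
Proof.
rewrite /gg /ggv /ggvv /uu. apply: is_derive_eq. rewrite -![_ *: _]/(_ * _). ring.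
Qed.

Definition XI (s0 xs vs c2 c3 t : R) := xs + vs * (t - s0) + c2 * (t - s0)^+2 + c3 * (t - s0)^+3.
Definition ETA (s0 vs c2 c3 t : R) := vs + 2 * c2 * (t - s0) + 3 * c3 * (t - s0)^+2.
Definition DETA (s0 c2 c3 t : R) := 2 * c2 + 6 * c3 * (t - s0).

Lemma dk_t (a0 K s b s0 xs vs c2 c3 x v t : R) :
  is_derive t 1 (fun r => a0 * expR (- K * (r - s0)) *
       gg s b (XI s0 xs vs c2 c3 r) (ETA s0 vs c2 c3 r) x v ^+ 3)
    (- K * (a0 * expR (- K * (t - s0))) * gg s b (XI s0 xs vs c2 c3 t) (ETA s0 vs c2 c3 t) x v ^+ 3
     + 3 * (a0 * expR (- K * (t - s0))) * gg s b (XI s0 xs vs c2 c3 t) (ETA s0 vs c2 c3 t) x v ^+ 2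
       * ggt s b (XI s0 xs vs c2 c3 t) (ETA s0 vs c2 c3 t) (DETA s0 c2 c3 t) x v).
Proof.
rewrite /gg /ggt /uu /XI /ETA /DETA. apply: is_derive_eq. rewrite -![_ *: _]/(_ * _). ring.
Qed.
Lemma pow_le (r T : R) n : 0 <= r -> r <= T -> r ^+ n <= T ^+ n.
Proof. move=> r0 rT; apply: lerXn2r => //; rewrite ?nnegrE //; lra. Qed.

Lemma poly3_bound (a0 a1 a2 a3 r T : R) : 0 <= r -> r <= T ->
  `|a0 + a1 * r + a2 * r^+2 + a3 * r^+3| <= `|a0| + `|a1| * T + `|a2| * T^+2 + `|a3| * T^+3.
Proof.
move=> r0 rT.
have h1 : `|a1 * r| <= `|a1| * T by rewrite normrM (ger0_norm r0); apply: ler_wpM2l.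
have h2 : `|a2 * r^+2| <= `|a2| * T^+2.
  by rewrite normrM (ger0_norm (exprn_ge0 _ r0)); apply: ler_wpM2l => //; exact: pow_le.
have h3 : `|a3 * r^+3| <= `|a3| * T^+3.
  by rewrite normrM (ger0_norm (exprn_ge0 _ r0)); apply: ler_wpM2l => //; exact: pow_le.
have t1 := ler_normD (a0 + a1 * r + a2 * r^+2) (a3 * r^+3).
have t2 := ler_normD (a0 + a1 * r) (a2 * r^+2).
have t3 := ler_normD a0 (a1 * r).
lra.
Qed.

Lemma sq_le (E M : R) : `|E| <= M -> E ^+ 2 <= M ^+ 2.
Proof.
move=> h; rewrite -real_normK ?num_real //; apply: lerXn2r => //; rewrite ?nnegrE //.
exact: le_trans h.
Qed.
Lemma sq_lt_bound (w d : R) : 0 < d -> w^+2 < d^+2 -> - d < w /\ w < d.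
Proof. move=> d0 h; split; nra. Qed.

Lemma blob (sg b dl xi eta x v : R) : 0 < sg -> 1 <= b -> 1 <= sg * b -> 1 <= sg^+2 * b ->
  4 <= b * dl^+2 -> 0 < dl -> 0 < gg sg b xi eta x v ->
  [/\ - 1 < v - eta /\ v - eta < 1, - 2 < x - xi /\ x - xi < 2 &
      `|xi - x| < dl /\ `|eta - v| < dl].
Proof.
move=> sg0 b1 hsb hs2b hbd dl0 g0.
move: g0; rewrite /gg -/(uu sg b xi eta x v).
set u := uu sg b xi eta x v; set w := v - eta => g0.
have b0 : 0 < b by lra.
have al : b <= alph sg b.
  rewrite /alph; have : 16 * sg^+2 * b^+3 = 16 * (sg^+2 * b) * b^+2 by ring.
  move=> ->; have : b <= b^+2 by nra. nra.
have w2 : 0 <= b * w^+2 by apply: mulr_ge0; [lra| exact: sqr_ge0].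
have u2 : 0 <= alph sg b * u^+2 by apply: mulr_ge0; [lra| exact: sqr_ge0].
have Hw : b * w^+2 < 1 by lra.
have Hu : b * u^+2 < 1.
  have : b * u^+2 <= alph sg b * u^+2 by apply: ler_wpM2r => //; exact: sqr_ge0.
  lra.
have w1 : w^+2 < 1^+2 by rewrite expr1n; nra.
have u1 : u^+2 < 1^+2 by rewrite expr1n; nra.
have [w1a w1b] := sq_lt_bound w 1 ltr01 w1.
have [u1a u1b] := sq_lt_bound u 1 ltr01 u1.
have wd : w^+2 < (dl / 2)^+2.
  have e : (dl / 2)^+2 = dl^+2 / 4 by field.
  rewrite e; nra.
have ud : u^+2 < (dl / 2)^+2.
  have e : (dl / 2)^+2 = dl^+2 / 4 by field.
  rewrite e; nra.
have [wda wdb] := sq_lt_bound w (dl/2) (divr_gt0 dl0 (ltr0Sn _ 1)) wd.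
have [uda udb] := sq_lt_bound u (dl/2) (divr_gt0 dl0 (ltr0Sn _ 1)) ud.
have tau0 : 0 < tau sg b by rewrite /tau invr_gt0; nra.
have tau1 : tau sg b <= 1.
  rewrite /tau invr_le1 //; [nra| rewrite unitfE; nra| nra].
have ex : x - xi = u + tau sg b * w by rewrite /u /w /uu; ring.
have tw1 : - 1 < tau sg b * w /\ tau sg b * w < 1 by split; nra.
have twd : - (dl / 2) < tau sg b * w /\ tau sg b * w < dl / 2 by split; nra.
split.
- by split.
- by rewrite ex; split; lra.
- split.
  + rewrite distrC; apply/ltr_normlP; rewrite ex; split; lra.
  + rewrite distrC; apply/ltr_normlP; rewrite /w in wda wdb; split; lra.
Qed.
End Helpers.
Arguments alph {R}. Arguments tau {R}. Arguments uu {R}. Arguments gg {R}.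
Arguments ggt {R}. Arguments ggx {R}. Arguments ggv {R}. Arguments ggvv {R}.
Arguments XI {R}. Arguments ETA {R}. Arguments DETA {R}.


Section Helpers2.
Variable R : realType.
Ltac cstep := match goal with
  | |- {for _, continuous (fun _ => ?c)} => apply: c_cst
  | |- {for _, continuous (fun q => q.1.1)} => apply: c_t
  | |- {for _, continuous (fun q => q.1.2)} => apply: c_x
  | |- {for _, continuous (fun q => q.2)} => apply: c_v
  | |- {for _, continuous (fun q => @?F q ^+ ?n)} => apply: (c_pow _ _ F)
  | |- {for _, continuous (fun q => @?F q * @?G q)} => apply: (c_mul _ _ F G)
  | |- {for _, continuous (fun q => @?F q - @?G q)} => apply: (c_sub _ _ F G)
  | |- {for _, continuous (fun q => @?F q + @?G q)} => apply: (c_add _ _ F G)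
  | |- {for _, continuous (fun q => - @?F q)} => apply: (c_opp _ _ F)
  | |- {for _, continuous (fun q => expR (@?F q))} => apply: (c_exp _ _ F)
  end.
Lemma k_cont (a0 K s sg bt xs vs c2 c3 : R) (p : R * R * R) :
  {for p, continuous (fun q : R * R * R => a0 * expR (- K * (q.1.1 - s)) *
     gg sg bt (XI s xs vs c2 c3 q.1.1) (ETA s vs c2 c3 q.1.1) q.1.2 q.2 ^+ 3)}.
Proof.
rewrite /gg /uu /alph /tau /XI /ETA.
repeat cstep.
Qed.
Lemma lin_deriv (F G : R -> R) (c x dF dG : R) : is_derive x 1 F dF -> is_derive x 1 G dG ->
  is_derive x 1 (fun y => c * F y - G y) (c * dF - dG).
Proof. move=> h1 h2; apply: is_derive_eq; rewrite -![_ *: _]/(_ * _); ring. Qed.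
Lemma exp_deriv (F G : R -> R) (nu x dF dG : R) : is_derive x 1 F dF -> is_derive x 1 G dG ->
  is_derive x 1 (fun y => expR (- nu * y) * F y - G y) (- nu * expR (- nu * x) * F x + expR (- nu * x) * dF - dG).
Proof. move=> h1 h2; apply: is_derive_eq; rewrite -![_ *: _]/(_ * _); ring. Qed.
Lemma vf_deriv (F : R -> R) (x dF : R) : is_derive x 1 F dF ->
  is_derive x 1 (fun w => w * F w) (F x + x * dF).
Proof. move=> h1; apply: is_derive_eq; rewrite -![_ *: _]/(_ * _); ring. Qed.
Lemma d1_val (F : R -> R) (x dF : R) : is_derive x 1 F dF -> derive1 F x = dF.
Proof. by move=> h; rewrite derive1E derive_val. Qed.
Lemma d1_is (F : R -> R) (x : R) : derivable F x 1 -> is_derive x 1 F (derive1 F x).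
Proof. by move=> h; rewrite derive1E; exact: derivableP. Qed.
End Helpers2.

Arguments barrier_core {R}.
Arguments gg_le1 {R}.
Arguments barrier_main {R}.
Arguments deriv_cvg {R}.
Arguments near0'_ball {R}.
Arguments left_min_deriv {R}.
Arguments second_min {R}.
Arguments final_contra {R}.
Arguments dk_x {R}.
Arguments dk_v {R}.
Arguments dk_vv {R}.
Arguments dk_t {R}.
Arguments pow_le {R}.
Arguments poly3_bound {R}.
Arguments sq_le {R}.
Arguments sq_lt_bound {R}.
Arguments blob {R}.
Arguments k_cont {R}.
Arguments lin_deriv {R}.
Arguments exp_deriv {R}.
Arguments vf_deriv {R}.
Arguments d1_val {R}.
Arguments d1_is {R}.

Theorem proposition7p1 (R : realType) (nu sigma : R) (V : R -> R)
    (f0 : R * R -> R) (f : R -> R -> R -> R) :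
  0 < nu -> 0 < sigma ->
  W2inf_loc V ->
  V x @[x --> +oo] --> +oo ->
  V x @[x --> -oo] --> +oo ->
  (@leb2 R).-integrable setT (fun z => (f0 z)%:E) ->
  (forall z, 0 <= f0 z) ->
  (\int[@leb2 R]_z (f0 z)%:E = 1)%E ->
  kfp_solution nu sigma V f0 f ->
  forall t x v, 0 < t -> 0 < f t x v.
Proof.
move=> nu0 sg0 [Vd VL] _ _ _ _ _ [reg [cf [_ [_ [_ [_ [eqn [nonneg [mass _]]]]]]]]] t0 x0 v0 t00.
rewrite ltNge; apply/negP => fle0.
set s := t0 / 2.
have s0 : 0 < s by rewrite divr_gt0.
have st0 : s < t0 by rewrite /s; lra.
have [[xs vs] /= fpos] : exists z : R * R, 0 < f s z.1 z.2.
  apply: contrapT => H.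
  have fz : forall z : R * R, f s z.1 z.2 = 0.
    move=> z; apply/eqP; rewrite eq_le nonneg // andbT leNgt; apply/negP => hz.
    by apply: H; exists z.
  have [_ hm] := mass s s0.
  have e : (fun z : R * R => (f s z.1 z.2)%:E) = (fun _ => 0%E) by apply/funext => z; rewrite fz.
  by move: hm; rewrite e integral0 => -[] /esym/eqP; rewrite oner_eq0.
set c := f s xs vs / 2.
have c0 : 0 < c by rewrite divr_gt0.
have [dl dl0 Hdl] : exists2 dl : R, 0 < dl & forall x v, `|xs - x| < dl -> `|vs - v| < dl -> c < f s x v.
  have H := cvgr_gt _ (cf s xs vs s0) c ltac:(rewrite /c; lra).
  have [r r0 Hr] := (nbhs_ballP _ _).1 H.
  exists r => // x v hx hv.
  have := Hr ((s, x), v); apply.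
  by split; [split; [exact: ballxx| ] | ]; rewrite /ball /=.
set T := t0 - s.
have T0 : 0 < T by rewrite /T; lra.
set dX := x0 - xs - vs * T; set dV := v0 - vs.
set c2 := (3 * dX - dV * T) / T^+2; set c3 := (dV * T - 2 * dX) / T^+3.
have xi_t0 : XI s xs vs c2 c3 t0 = x0.
  rewrite /XI -/T /c2 /c3 /dX; field; exact: lt0r_neq0.
have eta_t0 : ETA s vs c2 c3 t0 = v0.
  rewrite /ETA -/T /c2 /c3 /dX /dV; field; exact: lt0r_neq0.
have xi_s : XI s xs vs c2 c3 s = xs by rewrite /XI subrr; ring.
have eta_s : ETA s vs c2 c3 s = vs by rewrite /ETA subrr; ring.
set Hx := `|xs| + `|vs| * T + `|c2| * T^+2 + `|c3| * T^+3.
set Hv := `|vs| + `|2 * c2| * T + `|3 * c3| * T^+2 + `|0:R| * T^+3.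
set Hd := `|2 * c2| + `|6 * c3| * T + `|0:R| * T^+2 + `|0:R| * T^+3.
have bXI : forall t, s <= t -> t <= t0 -> `|XI s xs vs c2 c3 t| <= Hx.
  move=> t h1 h2; apply: poly3_bound; rewrite /T; lra.
have bETA : forall t, s <= t -> t <= t0 -> `|ETA s vs c2 c3 t| <= Hv.
  move=> t h1 h2; rewrite /ETA (_ : _ + _ = vs + 2 * c2 * (t - s) + 3 * c3 * (t - s)^+2 + 0 * (t - s)^+3);
    last by ring.
  apply: poly3_bound; rewrite /T; lra.
have bDETA : forall t, s <= t -> t <= t0 -> `|DETA s c2 c3 t| <= Hd.
  move=> t h1 h2; rewrite /DETA (_ : _ + _ = 2 * c2 + 6 * c3 * (t - s) + 0 * (t - s)^+2 + 0 * (t - s)^+3);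
    last by ring.
  apply: poly3_bound; rewrite /T; lra.
have Hx0 : 0 <= Hx by have := bXI s (lexx _) (ltW st0); apply: le_trans.
have Hv0 : 0 <= Hv by have := bETA s (lexx _) (ltW st0); apply: le_trans.
set Rx := Hx + 3; set Rv := Hv + 2.
have [L HL] := VL (- Rx) Rx.
set M := Hd + `|derive1 V 0| + `|L| * Rx + nu * Rv.
have bE : forall t x v, s <= t -> t <= t0 -> - Rx <= x <= Rx -> - Rv <= v <= Rv ->
    (DETA s c2 c3 t + derive1 V x + nu * v)^+2 <= M^+2.
  move=> t x v h1 h2 hx hv; apply: sq_le.
  have hL := HL x 0 hx ltac:(rewrite /Rx; apply/andP; split; lra).
  have nx : `|x| <= Rx by apply/ler_normlP; move/andP: hx => [? ?]; split; lra.
  have nv : `|v| <= Rv by apply/ler_normlP; move/andP: hv => [? ?]; split; lra.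
  have t1 := ler_normD (DETA s c2 c3 t + derive1 V x) (nu * v).
  have t2 := ler_normD (DETA s c2 c3 t) (derive1 V x).
  have t3 : `|derive1 V x| <= `|derive1 V 0| + `|derive1 V x - derive1 V 0|.
    by have := ler_normD (derive1 V 0) (derive1 V x - derive1 V 0); rewrite addrC subrK.
  have t4 : L * `|x - 0| <= `|L| * Rx.
    rewrite subr0; apply: le_trans (ler_norm _) _; rewrite normrM normr_id.
    by apply: ler_wpM2l.
  have t5 : `|nu * v| <= nu * Rv by rewrite normrM (gtr0_norm nu0); apply: ler_wpM2l => //; exact: ltW.
  have := bDETA t h1 h2; rewrite /M; lra.
set bt := 1 + 4 / dl^+2 + 1 / sigma^+2 + 1 / sigma.
have b1 : 1 <= bt.
  have : 0 <= 4 / dl^+2 by apply: divr_ge0 => //; exact: sqr_ge0.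
  have : 0 <= 1 / sigma^+2 by apply: divr_ge0 => //; exact: sqr_ge0.
  have : 0 <= 1 / sigma by apply: divr_ge0 => //; exact: ltW.
  rewrite /bt; lra.
have hsb : 1 <= sigma * bt.
  have e : sigma * bt = sigma * (1 + 4 / dl^+2 + 1 / sigma^+2) + 1.
    by rewrite /bt; field; rewrite !gt_eqF.
  have : 0 <= sigma * (1 + 4 / dl^+2 + 1 / sigma^+2).
    apply: mulr_ge0; first lra.
    have : 0 <= 4 / dl^+2 by apply: divr_ge0 => //; exact: sqr_ge0.
    have : 0 <= 1 / sigma^+2 by apply: divr_ge0 => //; exact: sqr_ge0.
    lra.
  lra.
have hs2b : 1 <= sigma^+2 * bt.
  have e : sigma^+2 * bt = sigma^+2 * (1 + 4 / dl^+2 + 1 / sigma) + 1.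
    by rewrite /bt; field; rewrite !gt_eqF.
  have : 0 <= sigma^+2 * (1 + 4 / dl^+2 + 1 / sigma).
    apply: mulr_ge0; first exact: sqr_ge0.
    have : 0 <= 4 / dl^+2 by apply: divr_ge0 => //; exact: sqr_ge0.
    have : 0 <= 1 / sigma by apply: divr_ge0 => //; exact: ltW.
    lra.
  lra.
have hbd : 4 <= bt * dl^+2.
  have e : bt * dl^+2 = dl^+2 * (1 + 1 / sigma^+2 + 1 / sigma) + 4.
    by rewrite /bt; field; rewrite !gt_eqF.
  have : 0 <= dl^+2 * (1 + 1 / sigma^+2 + 1 / sigma).
    apply: mulr_ge0; first exact: sqr_ge0.
    have : 0 <= 1 / sigma^+2 by apply: divr_ge0 => //; exact: sqr_ge0.
    have : 0 <= 1 / sigma by apply: divr_ge0 => //; exact: ltW.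
    lra.
  lra.
have bt0 : 0 < bt by lra.
clearbody bt.
set K := 12 * sigma * bt + M^+2 / sigma + 1.
set a0 := expR (- nu * s) * c.
have a00 : 0 < a0 by rewrite /a0 mulr_gt0 // expR_gt0.
pose k := fun t x v => a0 * expR (- K * (t - s)) *
   gg sigma bt (XI s xs vs c2 c3 t) (ETA s vs c2 c3 t) x v ^+ 3.
pose psi := fun p : R * R * R => expR (- nu * p.1.1) * f p.1.1 p.1.2 p.2 - k p.1.1 p.1.2 p.2.
pose A := (`[s, t0] `*` `[- Rx, Rx]) `*` `[- Rv, Rv].
have pA : A ((t0, x0), v0).
  have := bXI t0 (ltW st0) (lexx _); rewrite xi_t0 => /ler_normlP [h1 h2].
  have := bETA t0 (ltW st0) (lexx _); rewrite eta_t0 => /ler_normlP [h3 h4].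
  split; [split|]; rewrite /= in_itv /=; apply/andP; split; rewrite /Rx /Rv; lra.
have [pm pmA pmmin] : exists2 pm, pm \in A & forall q, q \in A -> psi pm <= psi q.
  apply: compact_EVT_min.
  - by exists ((t0, x0), v0).
  - apply: compact_setX; [apply: compact_setX|]; exact: segment_compact.
  - apply: continuous_in_subspaceT => -[[pt px] pv].
    rewrite inE => -[[/= + _] _]; rewrite in_itv /= => /andP [hpt _].
    have pt0 : 0 < pt by lra.
    apply: c_sub; first by apply: c_mul; [apply: c_exp; apply: c_mul; [exact: c_cst| exact: c_t]
                                       | exact: cf].
    exact: k_cont.
have pAin : ((t0, x0), v0) \in A by rewrite inE.
have psic : psi ((t0, x0), v0) < 0.
  rewrite /psi /k /= xi_t0 eta_t0.
  have -> : gg sigma bt x0 v0 x0 v0 = 1 by rewrite /gg /uu !subrr mulr0 subr0 expr0n /= !mulr0 !subr0.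
  rewrite expr1n mulr1.
  have : expR (- nu * t0) * f t0 x0 v0 <= 0.
    by rewrite pmulr_rle0 // expR_gt0.
  have : 0 < a0 * expR (- K * (t0 - s)) by rewrite mulr_gt0 // expR_gt0.
  lra.
have psim := pmmin _ pAin.
move: pmA pmmin psim; case: pm => -[tm xm] vm.
rewrite inE => -[[/= htm hxm] hvm] pmmin psim.
move: htm hxm hvm; rewrite !in_itv /= => /andP [tm1 tm2] /andP [xm1 xm2] /andP [vm1 vm2].
have tm0 : 0 < tm by lra.
set E0 := expR (- nu * tm).
have E00 : 0 < E0 by exact: expR_gt0.
set Am := a0 * expR (- K * (tm - s)).
have Am0 : 0 < Am by rewrite mulr_gt0 // expR_gt0.
set gm := gg sigma bt (XI s xs vs c2 c3 tm) (ETA s vs c2 c3 tm) xm vm.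
have psineg : psi ((tm, xm), vm) < 0 by lra.
have gm0 : 0 < gm.
  have fnn := nonneg tm xm vm tm0.
  have : 0 < Am * gm ^+ 3.
    move: psineg; rewrite /psi /k /= -/E0 -/Am -/gm => h.
    have : 0 <= E0 * f tm xm vm by apply: mulr_ge0 => //; exact: ltW.
    lra.
  rewrite pmulr_rgt0 // => h; rewrite ltNge; apply/negP => hle.
  have : gm ^+ 3 <= 0.
    rewrite exprSr; apply: mulr_ge0_le0 => //; exact: sqr_ge0.
  lra.
have [[bv1 bv2] [bx1 bx2] _] := blob _ _ _ _ _ _ _ sg0 b1 hsb hs2b hbd dl0 gm0.
have hX := bXI tm tm1 tm2; have hV := bETA tm tm1 tm2.
move/ler_normlP: hX => [hX1 hX2]; move/ler_normlP: hV => [hV1 hV2].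
have xmi : - Rx < xm < Rx by apply/andP; rewrite /Rx; split; lra.
have vmi : - Rv < vm < Rv by apply/andP; rewrite /Rv; split; lra.
have tms : s < tm.
  rewrite lt_neqAle tm1 andbT; apply/negP => /eqP ets.
  move: gm0 psineg; rewrite /gm /psi /k /= -ets xi_s eta_s subrr mulr0 expR0 mulr1 => g0 hps.
  have [_ _ [hbx hbv]] := blob _ _ _ _ _ _ _ sg0 b1 hsb hs2b hbd dl0 g0.
  have fc := Hdl xm vm hbx hbv.
  have g1 := gg_le1 sigma bt xs vs xm vm (ltW sg0) (ltW bt0).
  have : gg sigma bt xs vs xm vm ^+ 3 <= 1.
    rewrite -(expr1n _ 3); apply: lerXn2r => //; rewrite ?nnegrE //; exact: ltW.
  have : expR (- nu * s) * c <= expR (- nu * s) * f s xm vm.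
    by apply: ler_wpM2l; [exact: ltW (expR_gt0 _)| exact: ltW].
  rewrite /a0 in hps.
  have ep : 0 < expR (- nu * s) * c by rewrite mulr_gt0 // expR_gt0.
  nra.
have inA : forall t y w, s <= t -> t <= t0 -> - Rx <= y -> y <= Rx -> - Rv <= w -> w <= Rv ->
    ((t, y), w) \in A.
  by move=> t y w h1 h2 h3 h4 h5 h6; rewrite inE; split; [split|]; rewrite /= in_itv /=;
     apply/andP; split.
move/andP: xmi => [xmi1 xmi2]; move/andP: vmi => [vmi1 vmi2].
set xit := XI s xs vs c2 c3 tm; set etat := ETA s vs c2 c3 tm; set detat := DETA s c2 c3 tm.
pose phix := fun y => E0 * f tm y vm - k tm y vm.
have Dx : forall y : R, is_derive y (1:R) phix
    (E0 * dx f tm y vm - 3 * Am * gg sigma bt xit etat y vm ^+ 2 * ggx sigma bt xit etat y vm).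
  move=> y; apply: lin_deriv; last exact: (dk_x Am sigma bt xit etat y vm).
  have [_ h _ _] := reg tm y vm tm0; rewrite /dx; exact: d1_is.
have hx0 : is_derive xm 1 phix 0.
  apply: (@derive1_at_min R phix (- Rx) Rx xm).
  - lra.
  - by move=> y _; case: (Dx y).
  - by rewrite in_itv /=; apply/andP.
  - move=> y; rewrite in_itv /= => /andP [y1 y2].
    have := pmmin _ (inA tm y vm tm1 tm2 (ltW y1) (ltW y2) (ltW vmi1) (ltW vmi2)).
    by rewrite /psi /phix /=.
have hx : E0 * dx f tm xm vm - 3 * Am * gm ^+ 2 * ggx sigma bt xit etat xm vm = 0.
  by have := d1_val _ _ _ (Dx xm); rewrite (d1_val _ _ _ hx0) => <-.
pose phiv := fun w => E0 * f tm xm w - k tm xm w.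
pose dphiv := fun w => E0 * dv f tm xm w - 3 * Am * gg sigma bt xit etat xm w ^+ 2 * ggv sigma bt xit etat xm w.
have Dv : forall y : R, is_derive y (1:R) phiv (dphiv y).
  move=> y; apply: lin_deriv; last exact: (dk_v Am sigma bt xit etat xm y).
  have [_ _ h _] := reg tm xm y tm0; rewrite /dv; exact: d1_is.
have hv0 : is_derive vm 1 phiv 0.
  apply: (@derive1_at_min R phiv (- Rv) Rv vm).
  - lra.
  - by move=> y _; case: (Dv y).
  - by rewrite in_itv /=; apply/andP.
  - move=> y; rewrite in_itv /= => /andP [y1 y2].
    have := pmmin _ (inA tm xm y tm1 tm2 (ltW xmi1) (ltW xmi2) (ltW y1) (ltW y2)).
    by rewrite /psi /phiv /=.
have hv : dphiv vm = 0.
  by have := d1_val _ _ _ (Dv vm); rewrite (d1_val _ _ _ hv0) => <-.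
have Ddv : is_derive vm 1 dphiv
    (E0 * dvv f tm xm vm - 3 * Am * (2 * gm * ggv sigma bt xit etat xm vm ^+ 2 + gm ^+ 2 * ggvv sigma bt)).
  apply: lin_deriv; last exact: (dk_vv Am sigma bt xit etat xm vm).
  have [_ _ _ h] := reg tm xm vm tm0; rewrite /dvv; exact: d1_is.
have hvv : 0 <= E0 * dvv f tm xm vm - 3 * Am * (2 * gm * ggv sigma bt xit etat xm vm ^+ 2 + gm ^+ 2 * ggvv sigma bt).
  rewrite -(d1_val _ _ _ Ddv).
  apply: (second_min phiv dphiv vm (- Rv) Rv vmi1 vmi2) => //.
  move=> y y1 y2.
    have := pmmin _ (inA tm xm y tm1 tm2 (ltW xmi1) (ltW xmi2) (ltW y1) (ltW y2)).
  by rewrite /psi /phiv /=.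
pose phit := fun r => expR (- nu * r) * f r xm vm - k r xm vm.
have Dt : is_derive tm 1 phit
   (- nu * E0 * f tm xm vm + E0 * dt f tm xm vm -
    (- K * Am * gm ^+ 3 + 3 * Am * gm ^+ 2 * ggt sigma bt xit etat detat xm vm)).
  apply: exp_deriv; last exact: (dk_t a0 K sigma bt s xs vs c2 c3 xm vm tm).
  have [h _ _ _] := reg tm xm vm tm0; rewrite /dt; exact: d1_is.
have ht : - nu * E0 * f tm xm vm + E0 * dt f tm xm vm -
    (- K * Am * gm ^+ 3 + 3 * Am * gm ^+ 2 * ggt sigma bt xit etat detat xm vm) <= 0.
  rewrite -(d1_val _ _ _ Dt).
  apply: (left_min_deriv _ _ (tm - s)); first by case: Dt.
    lra.
  move=> y y1 y2.
  have := pmmin _ (inA y xm vm ltac:(lra) ltac:(lra) (ltW xmi1) (ltW xmi2) (ltW vmi1) (ltW vmi2)).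
  by rewrite /psi /phit /=.
have heq := eqn tm xm vm tm0.
have hvf : dv_vf f tm xm vm = f tm xm vm + vm * dv f tm xm vm.
  have [_ _ h _] := reg tm xm vm tm0.
  rewrite /dv_vf; apply: d1_val; apply: (vf_deriv (fun w => f tm xm w)).
  rewrite /dv; exact: d1_is.
rewrite hvf in heq.
have hb := barrier_main sigma bt K (M ^+ 2) Am xit etat detat xm vm (derive1 V xm) nu sg0 bt0 Am0 gm0
   (bE tm xm vm tm1 tm2 ltac:(apply/andP; split; lra) ltac:(apply/andP; split; lra)) (lexx K).
apply: (final_contra _ _ _ _ _ _ _ _ _ _ _ _ _ _ E00 sg0 hx _ hvv ht heq hb).
exact: hv.
Qed.
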